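(* Let $\mathbf v\in\mathbb N_0^d$ and let $P(\mathbf x,t)=\sum_{\mathbf k\le\mathbf v}p_{\mathbf k}(t)\mathbf x^{\mathbf k}$, where $p_{\mathbf k}:[0,\infty)\to\mathbb R$. Then $P$ is time-space harmonic with respect to $\{t\cdot\boldsymbol\mu\}_{t\ge0}$ if and only if, for all $t\ge0$ and all $\mathbf k\le\mathbf v$, $$p_{\mathbf k}(t)=\sum_{\mathbf k\le\mathbf i\le\mathbf v}\binom{\mathbf i}{\mathbf k}\,p_{\mathbf i}(0)\,m_{\mathbf i-\mathbf k}(-t).$$ Equivalently, $P$ is time-space harmonic if and only if $P(\mathbf x,t)=\sum_{\mathbf k\le\mathbf v}p_{\mathbf k}(0)\,Q_{\mathbf k}(\mathbf x,t)$ for all $t\ge0$; in particular every time-space harmonic polynomial is a linear combination of the $Q_{\mathbf k}$.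
   Context: Fix $d\ge1$. Multi-index notation: for $\mathbf v\in\mathbb N_0^d$, $\mathbf v!=\prod_i v_i!$, $\mathbf x^{\mathbf v}=\prod_i x_i^{v_i}$; $\mathbf k\le\mathbf v$ means $k_i\le v_i$ for all $i$; $\binom{\mathbf v}{\mathbf k}=\prod_i\binom{v_i}{k_i}$. Let $\boldsymbol\mu$ be a $d$-tuple of umbral monomials with multivariate moments $g_{\mathbf v}=E[\boldsymbol\mu^{\mathbf v}]$, $g_{\mathbf 0}=1$, and generating function $f(\boldsymbol\mu,\mathbf z)=\sum_{\mathbf v}g_{\mathbf v}\mathbf z^{\mathbf v}/\mathbf v!$ (formal power series). For $t\in\mathbb R$, $t\cdot\boldsymbol\mu$ is the auxiliary umbral $d$-tuple with moments $m_{\mathbf v}(t)=E[(t\cdot\boldsymbol\mu)^{\mathbf v}]$ defined by $\sum_{\mathbf v}m_{\mathbf v}(t)\mathbf z^{\mathbf v}/\mathbf v!=f(\boldsymbol\mu,\mathbf z)^t=\exp(t\log f(\boldsymbol\mu,\mathbf z))$. $Q_{\mathbf k}(\mathbf x,t)=E[(\mathbf x-t\cdot\boldsymbol\mu)^{\mathbf k}]=\sum_{\mathbf i\le\mathbf k}\binom{\mathbf k}{\mathbf i}\mathbf x^{\mathbf k-\mathbf i}m_{\mathbf i}(-t)$. Time-space harmonicity: the conditional evaluation given $s\cdot\boldsymbol\mu$ is defined by linearity from $E[(t\cdot\boldsymbol\mu)^{\mathbf k}\mid s\cdot\boldsymbol\mu]=\sum_{\mathbf j\le\mathbf k}\binom{\mathbf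 k}{\mathbf j}(s\cdot\boldsymbol\mu)^{\mathbf j}m_{\mathbf k-\mathbf j}(t-s)$. $P(\mathbf x,t)=\sum_{\mathbf k\le\mathbf v}p_{\mathbf k}(t)\mathbf x^{\mathbf k}$ is time-space harmonic with respect to $\{t\cdot\boldsymbol\mu\}_{t\ge0}$ if $E[P(t\cdot\boldsymbol\mu,t)\mid s\cdot\boldsymbol\mu]=P(s\cdot\boldsymbol\mu,s)$ for all $0\le s\le t$, equality meaning equality of coefficients of each $(s\cdot\boldsymbol\mu)^{\mathbf j}$; explicitly: for all $0\le s\le t$ and all $\mathbf j\le\mathbf v$, $\sum_{\mathbf j\le\mathbf k\le\mathbf v}p_{\mathbf k}(t)\binom{\mathbf k}{\mathbf j}m_{\mathbf k-\mathbf j}(t-s)=p_{\mathbf j}(s)$. *)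

(* Defs.v *)
From HB Require Import structures.
From mathcomp Require Import all_boot all_order all_algebra.
Set Implicit Arguments. Unset Strict Implicit. Unset Printing Implicit Defensive.
Import Order.TTheory GRing.Theory Num.Theory.
Local Open Scope ring_scope.

Definition mi (d : nat) := {ffun 'I_d -> nat}.

Definition mle d (k v : mi d) : bool := [forall i, (k i <= v i)%N].
Definition msub d (v k : mi d) : mi d := [ffun i => (v i - k i)%N].
Definition mbin d (v k : mi d) : nat := (\prod_(i < d) 'C(v i, k i))%N.
Definition mdeg d (v : mi d) : nat := (\sum_(i < d) v i)%N.
Definition m0 d : mi d := [ffun _ => 0%N].
Definition mbnd d (v : mi d) : nat := (\max_(i < d) v i)%N.

(* The list of all multi-indices k with k <= v (without repetition). *)
Definition box d (v : mi d) : seq (mi d) :=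
  map (fun k : {ffun 'I_d -> 'I_(mbnd v).+1} => [ffun i => nat_of_ord (k i)] : mi d)
      (enum [pred k : {ffun 'I_d -> 'I_(mbnd v).+1} | [forall i, (k i <= v i)%N]]).

Definition mono (R : nzRingType) d (x : 'I_d -> R) (k : mi d) : R :=
  \prod_(i < d) x i ^+ k i.

(* Formal power series in d variables, stored by their exponential
   coefficients: a represents sum_v a v z^v / v!. *)
Definition series (R : Type) d := mi d -> R.

Definition sone (R : nzRingType) d : series R d := fun v => (v == m0 d)%:R.
(* product of exponential generating functions *)
Definition smul (R : nzRingType) d (a b : series R d) : series R d :=
  fun v => \sum_(k <- box v) (mbin v k)%:R * a k * b (msub v k).
Definition spow (R : nzRingType) d (a : series R d) (n : nat) : series R d :=
  iter n (smul a) (@sone R d).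
(* log f = sum_{n>=1} (-1)^(n+1) (f-1)^n / n ; for f with constant term 1
   the coefficient at v only involves n <= |v|. *)
Definition slog (R : fieldType) d (a : series R d) : series R d :=
  fun v => \sum_(1 <= n < (mdeg v).+1)
             ((-1) ^+ n.+1 / n%:R) * spow (fun w => a w - @sone R d w) n v.
(* exp u = sum_{n>=0} u^n / n! ; for u with zero constant term
   the coefficient at v only involves n <= |v|. *)
Definition sexp (R : fieldType) d (a : series R d) : series R d :=
  fun v => \sum_(0 <= n < (mdeg v).+1) (n`!%:R)^-1 * spow a n v.

(* m_v(t) = coefficient of z^v/v! in f(mu,z)^t = exp(t log f(mu,z)),
   where g v = E[mu^v] are the moments of mu. *)
Definition moment (R : fieldType) d (g : series R d) (t : R) : series R d :=
  sexp (fun w => t * slog g w).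

(* Time-space harmonicity of P(x,t) = sum_{k<=v} p k t x^k, in the explicit
   coefficient form given in the paper. *)
Definition tsh (R : realFieldType) d (g : series R d) (v : mi d)
    (p : mi d -> R -> R) : Prop :=
  forall s t : R, 0 <= s -> s <= t ->
  forall j : mi d, mle j v ->
    \sum_(k <- box v | mle j k)
        p k t * (mbin k j)%:R * moment g (t - s) (msub k j) = p j s.

Definition Pev (R : realFieldType) d (v : mi d) (p : mi d -> R -> R)
    (x : 'I_d -> R) (t : R) : R :=
  \sum_(k <- box v) p k t * mono x k.

(* Q_k(x,t) = E[(x - t.mu)^k] = sum_{i<=k} C(k,i) x^(k-i) m_i(-t) *)
Definition Qpol (R : realFieldType) d (g : series R d) (k : mi d)
    (x : 'I_d -> R) (t : R) : R :=
  \sum_(i <- box k) (mbin k i)%:R * mono x (msub k i) * moment g (- t) i.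

(* Main.v *)
Set Warnings "-notation-overridden,-ambiguous-paths".
Require Import Defs.
From HB Require Import structures.
From mathcomp Require Import all_boot all_order all_algebra.
From mathcomp Require Import zify ring.
Import Order.TTheory GRing.Theory Num.Theory.

Ltac genff := repeat match goal with | |- context [@fun_of_fin ?a ?b ?c ?f ?x] => let n := fresh "n" in set n := (@fun_of_fin a b c f x); clearbody n end; intros; lia.

Section MI.
Variable d : nat.
Implicit Types (k v w i j l : mi d).

Lemma mleP k v : reflect (forall x, k x <= v x)%N (mle k v).
Proof. exact: forallP. Qed.

Lemma mle_refl v : mle v v.
Proof. by apply/mleP. Qed.

Lemma mle_trans i j k : mle i j -> mle j k -> mle i k.
Proof. move=> /mleP h1 /mleP h2; apply/mleP=> x; exact: leq_trans (h1 x) (h2 x). Qed.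
Arguments mle_trans {i j k}.

Lemma mle_anti i j : mle i j -> mle j i -> i = j.
Proof. move=> /mleP h1 /mleP h2; apply/ffunP=> x; apply/eqP; rewrite eqn_leq h1 h2. by []. Qed.
Arguments mle_anti {i j}.

Definition madd j k : mi d := [ffun x => j x + k x]%N.

Lemma msubE v k x : msub v k x = (v x - k x)%N.
Proof. by rewrite ffunE. Qed.
Lemma maddE j k x : madd j k x = (j x + k x)%N.
Proof. by rewrite ffunE. Qed.

Lemma mle_msub v k : mle (msub v k) v.
Proof. apply/mleP=> x; rewrite msubE; exact: leq_subr. Qed.

Lemma msubK k i : mle k i -> madd (msub i k) k = i.
Proof. move=> /mleP h; apply/ffunP=> x; rewrite maddE msubE; move: (h x); genff. Qed.
Arguments msubK {k i}.

Lemma maddK j k : msub (madd j k) k = j.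
Proof. apply/ffunP=> x; rewrite msubE maddE; genff. Qed.

Lemma msub_msub l k i : mle k i -> mle i l -> msub (msub l k) (msub i k) = msub l i.
Proof. move=> /mleP h1 /mleP h2; apply/ffunP=> x; rewrite !msubE; move: (h1 x) (h2 x); genff. Qed.
Arguments msub_msub {l k i}.

Lemma msubKK l i : mle i l -> msub l (msub l i) = i.
Proof. move=> /mleP h; apply/ffunP=> x; rewrite !msubE; move: (h x); genff. Qed.
Arguments msubKK {l i}.

Lemma msub0 v : msub v (m0 d) = v.
Proof. apply/ffunP=> x; rewrite msubE ffunE; genff. Qed.

Lemma msubvv v : msub v v = m0 d.
Proof. apply/ffunP=> x; rewrite msubE ffunE; genff. Qed.

Lemma mle0 v : mle (m0 d) v.
Proof. apply/mleP=> x; by rewrite ffunE. Qed.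

Lemma mle_sub_mono l k i : mle k i -> mle i l -> mle (msub i k) (msub l k).
Proof. move=> /mleP h1 /mleP h2; apply/mleP=> x; rewrite !msubE; move: (h1 x) (h2 x); genff. Qed.
Arguments mle_sub_mono {l k i}.

Lemma msub_eq0 l k : mle k l -> (msub l k == m0 d) = (l == k).
Proof.
move=> /mleP h; apply/eqP/eqP=> [e|->]; last exact: msubvv.
apply/ffunP=> x; have := congr1 (fun f : mi d => f x) e; rewrite msubE ffunE; move: (h x); genff.
Qed.
Arguments msub_eq0 {l k}.

Lemma mem_box k v : (k \in box v) = mle k v.
Proof.
apply/mapP/idP=> [[f]|hk].
  rewrite mem_enum inE => /forallP h ->; apply/mleP=> x; rewrite ffunE; exact: h.
have hb x : (k x < (mbnd v).+1)%N.
  rewrite ltnS; apply: leq_trans (mleP _ _ hk x) _; exact: leq_bigmax.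
exists [ffun x => Ordinal (hb x)].
  rewrite mem_enum inE; apply/forallP=> x; rewrite ffunE /=; exact: (mleP _ _ hk).
by apply/ffunP=> x; rewrite !ffunE.
Qed.

Lemma box_uniq v : uniq (box v).
Proof.
rewrite map_inj_uniq ?enum_uniq // => f1 f2 e; apply/ffunP=> x; apply: val_inj.
by have := congr1 (fun f : mi d => f x) e; rewrite !ffunE.
Qed.

Lemma box_sub (V : nmodType) (P : pred (mi d)) (F : mi d -> V) k v :
  mle k v ->
  (\sum_(i <- box k | P i) F i = \sum_(i <- box v | mle i k && P i) F i)%R.
Proof.
move=> hkv; rewrite -big_filter -[RHS]big_filter.
apply: perm_big; apply: uniq_perm; rewrite ?filter_uniq ?box_uniq //.
move=> i; rewrite !mem_filter !mem_box.
case hik: (mle i k); rewrite ?andbF //= (mle_trans hik hkv); by case: (P i).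
Qed.

Lemma box_shift (V : nmodType) (F : mi d -> V) k v :
  mle k v ->
  (\sum_(j <- box (msub v k)) F j = \sum_(i <- box v | mle k i) F (msub i k))%R.
Proof.
move=> hkv.
transitivity (\sum_(j <- map (fun i => msub i k) (filter (mle k) (box v))) F j)%R; last by rewrite big_map big_filter.
apply: perm_big; apply: uniq_perm; rewrite ?box_uniq //.
  rewrite map_inj_in_uniq ?filter_uniq ?box_uniq // => i1 i2.
  rewrite !mem_filter => /andP[h1 _] /andP[h2 _] e.
  by rewrite -(msubK h1) -(msubK h2) e.
move=> j; rewrite mem_box; apply/idP/mapP=> [hj|[i]].
  exists (madd j k); last by rewrite maddK.
  rewrite mem_filter mem_box; apply/andP; split; apply/mleP=> x; rewrite maddE.
    genff.
  move: (mleP _ _ hj x); rewrite msubE; move: (mleP _ _ hkv x); genff.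
rewrite mem_filter mem_box => /andP[h1 h2] ->; exact: mle_sub_mono.
Qed.

Lemma box_refl (V : nmodType) (F : mi d -> V) v :
  (\sum_(j <- box v) F j = \sum_(j <- box v) F (msub v j))%R.
Proof.
transitivity (\sum_(j <- map (msub v) (box v)) F j)%R; last by rewrite big_map.
apply: perm_big; apply: uniq_perm; rewrite ?box_uniq //.
  rewrite map_inj_in_uniq ?box_uniq // => i1 i2; rewrite !mem_box => h1 h2 e.
  by rewrite -(msubKK h1) -(msubKK h2) e.
move=> j; rewrite mem_box; apply/idP/mapP=> [hj|[i]].
  by exists (msub v j); rewrite ?mem_box ?mle_msub ?msubKK.
by move=> _ ->; exact: mle_msub.
Qed.

End MI.
Arguments mle_trans {d i j k}.
Arguments mle_anti {d i j}.
Arguments msubK {d k i}.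
Arguments msub_msub {d l k i}.
Arguments msubKK {d l i}.
Arguments mle_sub_mono {d l k i}.
Arguments msub_eq0 {d l k}.
Arguments box_shift {d V} F {k v}.
Arguments box_sub {d V} P F {k v}.
Arguments box_refl {d V} F v.

Lemma binM k i l : (k <= i <= l)%N -> ('C(i,k) * 'C(l,i) = 'C(l,k) * 'C(l-k,i-k))%N.
Proof.
case/andP=> hki hil.
have e1 := bin_fact hki. have e2 := bin_fact hil.
have hkl : (k <= l)%N by apply: leq_trans hki hil.
have e3 := bin_fact hkl.
have hs : (i - k <= l - k)%N by lia.
have e4 := bin_fact hs.
have hb : (l - k - (i - k) = l - i)%N by lia.
rewrite hb in e4.
apply/eqP; rewrite -(@eqn_pmul2r (k`! * (i-k)`! * (l-i)`!)); last by rewrite !muln_gt0 !fact_gt0.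
apply/eqP.
transitivity ('C(i,k) * (k`! * (i-k)`!) * ('C(l,i) * (l-i)`!))%N; first ring.
rewrite e1.
transitivity ('C(l,i) * (i`! * (l-i)`!))%N; first ring.
rewrite e2.
transitivity ('C(l,k) * k`! * ('C(l-k,i-k) * ((i-k)`! * (l-i)`!)))%N; last ring.
rewrite e4.
transitivity ('C(l,k) * (k`! * (l-k)`!))%N; last ring.
by rewrite e3.
Qed.

Lemma tri (V : nmodType) (H : nat -> nat -> V) M :
  (\sum_(0 <= N < M) \sum_(0 <= i < N.+1) H i (N - i)%N =
   \sum_(0 <= i < M) \sum_(0 <= j < (M - i)%N) H i j)%R.
Proof.
elim: M => [|M IH]; first by rewrite !big_geq.
rewrite big_nat_recr // IH [RHS]big_nat_recr //= subSnn.
rewrite big_nat_recr //= subnn big_nat1 addrA -big_split /=.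
apply: (congr1 (fun x => x + H M 0%N)%R).
rewrite big_nat [RHS]big_nat; apply: eq_bigr => i /andP[_ hi].
by rewrite subSn ?(ltnW hi) // big_nat_recr.
Qed.

Section Ser.
Variables (R : realFieldType) (d : nat).
Local Open Scope ring_scope.
Implicit Types (k v w i j l : mi d) (a b c : series R d).

Lemma mbinM k i l : mle k i -> mle i l ->
  (mbin i k * mbin l i = mbin l k * mbin (msub l k) (msub i k))%N.
Proof.
move=> /mleP h1 /mleP h2; rewrite /mbin -!big_split /=; apply: eq_bigr => x _.
rewrite !msubE; apply: binM; by rewrite h1 h2.
Qed.

Lemma keyK (X Y : series R d) k l : mle k l ->
  \sum_(i <- box l | mle k i) (mbin i k)%:R * (mbin l i)%:R * X (msub i k) * Y (msub l i)
  = (mbin l k)%:R * smul X Y (msub l k).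
Proof.
move=> hkl; rewrite [in RHS]/smul [in RHS](box_shift _ hkl) [in RHS]mulr_sumr.
rewrite [LHS]big_seq_cond [RHS]big_seq_cond.
apply: eq_bigr => i /andP[hi hki]; rewrite mem_box in hi.
rewrite (msub_msub hki hi) !mulrA -!natrM mbinM //.
Qed.

Lemma smul_ext a a' b b' w : (forall u, a u = a' u) -> (forall u, b u = b' u) ->
  smul a b w = smul a' b' w.
Proof. by move=> ea eb; rewrite /smul; apply: eq_bigr => k _; rewrite ea eb. Qed.

Lemma smulZl (x : R) a b w : smul (fun u => x * a u) b w = x * smul a b w.
Proof. rewrite /smul [in RHS]mulr_sumr; apply: eq_bigr => k _; ring. Qed.

Lemma smulZr (x : R) a b w : smul a (fun u => x * b u) w = x * smul a b w.
Proof. rewrite /smul [in RHS]mulr_sumr; apply: eq_bigr => k _; ring. Qed.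

Lemma mbin0 w : mbin w (m0 d) = 1%N.
Proof. by rewrite /mbin big1 // => x _; rewrite ffunE bin0. Qed.

Lemma smul1l b w : smul (@sone R d) b w = b w.
Proof.
rewrite /smul (bigD1_seq (m0 d)) ?mem_box ?mle0 ?box_uniq //= /sone eqxx mbin0 msub0.
rewrite mul1r mul1r big1 ?addr0 // => k hk; by rewrite (negbTE hk) mulr0 mul0r.
Qed.

Lemma smulA a b c w : smul (smul a b) c w = smul a (smul b c) w.
Proof.
rewrite /smul.
transitivity (\sum_(i <- box w) \sum_(k <- box w | mle k i)
   a k * ((mbin i k)%:R * (mbin w i)%:R * b (msub i k) * c (msub w i))).
  rewrite !big_seq; apply: eq_bigr => i hi; rewrite mem_box in hi.
  rewrite (box_sub _ _ hi) mulr_sumr mulr_suml.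
  apply: eq_big => [k|k _]; [by rewrite andbT | ring].
rewrite (exchange_big_dep xpredT) //= [LHS]big_seq [RHS]big_seq.
apply: eq_bigr => k hk; rewrite mem_box in hk.
rewrite -[LHS]mulr_sumr (keyK b c k w hk) /smul; ring.
Qed.

Lemma mdeg_sub w k : mle k w -> (mdeg (msub w k) + mdeg k)%N = mdeg w.
Proof.
move=> /mleP h; rewrite /mdeg -big_split; apply: eq_bigr => x _; rewrite msubE; exact: subnK (h x).
Qed.

Lemma mdeg_eq0 k : mdeg k = 0%N -> k = m0 d.
Proof.
move=> /eqP; rewrite /mdeg sum_nat_eq0 => /forallP h; apply/ffunP=> x; rewrite ffunE.
by move: (h x) => /= /eqP.
Qed.

Lemma mdeg0 : mdeg (m0 d) = 0%N.
Proof. by rewrite /mdeg big1 // => x _; rewrite ffunE. Qed.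

Lemma spowS a n w : spow a n.+1 w = smul a (spow a n) w.
Proof. by []. Qed.

Lemma spow_hi a n w : a (m0 d) = 0 -> (mdeg w < n)%N -> spow a n w = 0.
Proof.
move=> a0; elim: n w => [//|n IH] w hw; rewrite spowS /smul big1_seq // => k /andP[_ hk].
rewrite mem_box in hk.
case: (eqVneq k (m0 d)) => [->|nk]; first by rewrite a0 mulr0 mul0r.
rewrite IH ?mulr0 //.
have h1 := mdeg_sub w k hk.
have h2 : mdeg k <> 0%N by move/mdeg_eq0=> e; rewrite e eqxx in nk.
lia.
Qed.

Lemma spowZ (x : R) a n w : spow (fun u => x * a u) n w = x ^+ n * spow a n w.
Proof.
elim: n w => [|n IH] w; first by rewrite expr0 mul1r.
rewrite spowS (@smul_ext _ _ _ _ w (fun u => erefl) IH) smulZl smulZr spowS exprS.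
ring.
Qed.

Lemma spowD a n m w : smul (spow a n) (spow a m) w = spow a (n + m) w.
Proof.
elim: n w => [|n IH] w; first by rewrite smul1l.
rewrite addSn spowS -(@smul_ext _ _ _ _ w (fun u => erefl) IH) -smulA.
by apply: smul_ext.
Qed.

Variable g : series R d.
Let L := slog g.

Lemma slog0 : L (m0 d) = 0.
Proof. by rewrite /L /slog mdeg0 big_geq. Qed.

Lemma momentE t w M : (mdeg w < M)%N ->
  moment g t w = \sum_(0 <= n < M) t ^+ n / (n`!)%:R * spow L n w.
Proof.
move=> hM; rewrite /moment /sexp.
have Z : \sum_((mdeg w).+1 <= i < M) t ^+ i / (i`!)%:R * spow L i w = 0.
  rewrite big_nat_cond big1 // => n /andP[/andP[hn _] _]; rewrite spow_hi ?slog0 ?mulr0 //.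
rewrite (@big_cat_nat _ _ _ (mdeg w).+1 0 M) //= Z addr0.
apply: eq_bigr => n _; rewrite spowZ /L; ring.
Qed.

Lemma moment0 w : moment g 0 w = @sone R d w.
Proof.
rewrite (@momentE 0 w _ (ltnSn (mdeg w))) big_ltn // expr0 fact0 invr1 !mul1r.
rewrite big_nat_cond big1 ?addr0 // => n /andP[/andP[hn _] _].
by rewrite expr0n; case: n hn => // n _; rewrite mul0r mul0r.
Qed.

Lemma momentD (x y : R) w : smul (moment g x) (moment g y) w = moment g (x + y) w.
Proof.
set M := (mdeg w).+1.
pose F n m := x ^+ n / (n`!)%:R * (y ^+ m / (m`!)%:R) * spow L (n + m) w.
transitivity (\sum_(0 <= n < M) \sum_(0 <= m < M) F n m).
  rewrite /smul.
  transitivity (\sum_(k <- box w) \sum_(0 <= n < M) \sum_(0 <= m < M)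
     (mbin w k)%:R * (x ^+ n / (n`!)%:R * spow L n k) * (y ^+ m / (m`!)%:R * spow L m (msub w k))).
    rewrite big_seq [RHS]big_seq; apply: eq_bigr => k hk; rewrite mem_box in hk.
    have h1 := mdeg_sub w k hk.
    have hk1 : (mdeg k < M)%N by rewrite /M; lia.
    have hk2 : (mdeg (msub w k) < M)%N by rewrite /M; lia.
    rewrite (@momentE x k M hk1) (@momentE y (msub w k) M hk2).
    rewrite [(mbin w k)%:R * _]mulr_sumr big_distrlr; apply: eq_bigr => n _; apply: eq_bigr => m _.
    by [].
  rewrite exchange_big; apply: eq_bigr => n _; rewrite exchange_big; apply: eq_bigr => m _.
  rewrite /F -spowD /smul mulr_sumr; apply: eq_bigr => k _; ring.
transitivity (\sum_(0 <= N < M) \sum_(0 <= i < N.+1) F (N - i)%N i); last first.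
  rewrite (@momentE (x + y) w M) // big_nat [RHS]big_nat; apply: eq_bigr => N /andP[_ hN].
  rewrite exprDn -(big_mkord xpredT (fun i : nat => x ^+ (N - i) * y ^+ i *+ 'C(N, i))) mulr_suml mulr_suml.
  rewrite big_nat [RHS]big_nat; apply: eq_bigr => i /andP[_ hi]; rewrite ltnS in hi.
  rewrite /F subnK //.
  have e := bin_fact hi.
  have e' : ('C(N,i) * (i`! * (N-i)`!))%:R = (N`!)%:R :> R by rewrite e.
  rewrite !natrM in e'.
  have f1 : (i`!)%:R != 0 :> R by rewrite pnatr_eq0 -lt0n fact_gt0.
  have f2 : ((N - i)`!)%:R != 0 :> R by rewrite pnatr_eq0 -lt0n fact_gt0.
  rewrite -e' -mulr_natr; field.
  by rewrite f1 f2 /= pnatr_eq0 -lt0n bin_gt0.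
transitivity (\sum_(0 <= i < M) \sum_(0 <= j < (M - i)%N) F j i); last by rewrite (@tri _ (fun p q : nat => F q p) M).
rewrite exchange_big big_nat [RHS]big_nat; apply: eq_bigr => i /andP[_ hi].
have Z : \sum_((M - i)%N <= j < M) F j i = 0.
  rewrite big_nat_cond big1 // => j /andP[/andP[hj _] _].
  rewrite /F spow_hi ?slog0 ?mulr0 //; rewrite /M in hi hj *; lia.
by rewrite (@big_cat_nat _ _ _ (M - i) 0 M) //= ?Z ?addr0 // leq_subr.
Qed.

End Ser.

Lemma enc_inj B n (a b : 'I_n -> nat) : (forall i, a i < B)%N -> (forall i, b i < B)%N ->
  (\sum_(i < n) B ^ i * a i = \sum_(i < n) B ^ i * b i)%N -> forall i, a i = b i.
Proof.
elim: n a b => [|n IH] a b ha hb E i; first by case: i.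
move: E; rewrite !big_ord_recl /= !expn0 !mul1n.
under eq_bigr do rewrite /bump add1n expnS -mulnA.
under [X in _ = _ + X -> _]eq_bigr do rewrite /bump add1n expnS -mulnA.
rewrite -!big_distrr /= => E.
have hB : (0 < B)%N by apply: leq_ltn_trans (ha i).
have e0 : a ord0 = b ord0.
  have := congr1 (modn ^~ B) E; rewrite ![(_ + B * _)%N]addnC ![(B * _)%N]mulnC !modnMDl.
  by rewrite !modn_small.
have e1 : (\sum_(i < n) B ^ i * a (lift ord0 i) = \sum_(i < n) B ^ i * b (lift ord0 i))%N.
  have := congr1 (divn ^~ B) E; rewrite ![(_ + B * _)%N]addnC ![(B * _)%N]mulnC !divnMDl //.
  by rewrite !divn_small // !addn0.
case: (unliftP ord0 i) => [j ->|->] //.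
exact: (IH (fun j => a (lift ord0 j)) (fun j => b (lift ord0 j))).
Qed.

Lemma poly_zero (R : realFieldType) (q : {poly R}) : (forall y, q.[y] = 0)%R -> q = 0%R.
Proof.
move=> h; apply/eqP; apply/negPn/negP => nq.
have H1 : all (root q) [seq (n%:R : R)%R | n <- iota 0 (size q)].
  by apply/allP=> z /mapP[n _ ->]; rewrite /root h.
have H2 : uniq [seq (n%:R : R)%R | n <- iota 0 (size q)].
  by rewrite map_inj_uniq ?iota_uniq // => m n /eqP; rewrite eqr_nat => /eqP.
have := max_poly_roots nq H1 H2.
by rewrite size_map size_iota ltnn.
Qed.

Lemma poly_ident (R : realFieldType) d (v : mi d) (c : mi d -> R) :
  (forall x : 'I_d -> R, \sum_(k <- box v) c k * mono x k = 0)%R ->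
  forall j, mle j v -> c j = 0%R.
Proof.
move=> h j hj.
set B := (mbnd v).+1.
pose enc (k : mi d) := (\sum_(i < d) B ^ i * k i)%N.
pose q : {poly R} := (\sum_(k <- box v) c k *: 'X^(enc k))%R.
have hq : q = 0%R.
  apply: poly_zero => y; rewrite /q horner_sum -[RHS](h (fun i => y ^+ (B ^ i))%R).
  apply: eq_bigr => k _; rewrite hornerZ hornerXn /mono; congr (_ * _)%R.
  rewrite /enc -prodrXr; apply: eq_bigr => i _; by rewrite exprM.
have hB (k : mi d) : mle k v -> forall i, (k i < B)%N.
  move=> /mleP hk i; rewrite ltnS; apply: leq_trans (hk i) _; exact: leq_bigmax.
have := congr1 (fun p : {poly R} => (p`_(enc j))%R) hq.
rewrite coef0 /q coef_sum (bigD1_seq j) ?mem_box ?box_uniq //= coefZ coefXn eqxx mulr1.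
rewrite big1_seq ?addr0 // => k /andP[nk hk]; rewrite mem_box in hk.
rewrite coefZ coefXn; case: eqP => [e|]; last by rewrite mulr0.
have : k = j.
  apply/ffunP; exact: (enc_inj _ _ _ _ (hB k hk) (hB j hj) (esym e)).
by move=> ekj; rewrite ekj eqxx in nk.
Qed.

Local Open Scope ring_scope.

Section Main.
Variables (R : realFieldType) (d : nat) (g : series R d).

Lemma inv_core (q : mi d -> R) (s1 s2 : R) (v k : mi d) : mle k v ->
 \sum_(i <- box v | mle k i) (mbin i k)%:R *
    (\sum_(l <- box v | mle i l) (mbin l i)%:R * q l * moment g s2 (msub l i)) *
    moment g s1 (msub i k)
 = \sum_(l <- box v | mle k l) (mbin l k)%:R * q l * moment g (s1 + s2) (msub l k).
Proof.
move=> hkv.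
transitivity (\sum_(i <- box v | mle k i) \sum_(l <- box v | mle i l) q l *
   ((mbin i k)%:R * (mbin l i)%:R * moment g s1 (msub i k) * moment g s2 (msub l i))).
  apply: eq_bigr => i _; rewrite [(mbin i k)%:R * _]mulr_sumr mulr_suml.
  apply: eq_bigr => l _; ring.
rewrite (exchange_big_dep (mle k)) /=; last by move=> i l h1 h2; exact: mle_trans h1 h2.
rewrite big_seq_cond [RHS]big_seq_cond; apply: eq_bigr => l /andP[hl hkl]; rewrite mem_box in hl.
rewrite -mulr_sumr.
under eq_bigl => i do rewrite andbC.
rewrite -(box_sub (mle k) _ hl) (@keyK R d _ _ k l hkl) momentD; ring.
Qed.

Lemma single (q : mi d -> R) (v k : mi d) : mle k v ->
  \sum_(l <- box v | mle k l) (mbin l k)%:R * q l * @sone R d (msub l k) = q k.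
Proof.
move=> hkv; rewrite -big_filter (bigD1_seq k) ?mem_filter ?mle_refl ?mem_box ?filter_uniq ?box_uniq //=.
rewrite msubvv /sone eqxx mulr1.
have -> : mbin k k = 1%N by rewrite /mbin big1 // => x _; rewrite binn.
rewrite mul1r big1_seq ?addr0 // => l /andP[nl]; rewrite mem_filter => /andP[hkl _].
by rewrite (msub_eq0 hkl) (negbTE nl) mulr0.
Qed.


Definition Fm (v : mi d) (p : mi d -> R -> R) (j : mi d) (t : R) :=
  \sum_(i <- box v | mle j i) (mbin i j)%:R * p i 0 * moment g (- t) (msub i j).

Lemma part1 v p : tsh g v p <->
  (forall t : R, 0 <= t -> forall k, mle k v -> p k t = Fm v p k t).
Proof.
split=> [Ht t ht k hk | HF s t hs hst j hj].
  have E : forall i, mle i v -> p i 0 =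
      \sum_(l <- box v | mle i l) (mbin l i)%:R * p l t * moment g (t - 0) (msub l i).
    move=> i hi; rewrite -(Ht 0 t (lexx 0) ht i hi); apply: eq_bigr => l _; ring.
  symmetry; rewrite /Fm.
  transitivity (\sum_(i <- box v | mle k i) (mbin i k)%:R *
    (\sum_(l <- box v | mle i l) (mbin l i)%:R * p l t * moment g (t - 0) (msub l i)) *
    moment g (- t) (msub i k)).
    rewrite big_seq_cond [RHS]big_seq_cond; apply: eq_bigr => i /andP[hi _].
    by rewrite mem_box in hi; rewrite -E.
  rewrite (inv_core (fun l => p l t)) // subr0 addNr.
  under eq_bigr do rewrite moment0.
  exact: (single (fun l => p l t)).
have ht : 0 <= t by apply: le_trans hst.
rewrite (HF s hs j hj) /Fm.
transitivity (\sum_(k <- box v | mle j k) (mbin k j)%:R *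
    (\sum_(i <- box v | mle k i) (mbin i k)%:R * p i 0 * moment g (- t) (msub i k)) *
    moment g (t - s) (msub k j)).
  rewrite big_seq_cond [RHS]big_seq_cond; apply: eq_bigr => k /andP[hk _].
  rewrite mem_box in hk; rewrite (HF t ht k hk) /Fm; ring.
rewrite (inv_core (fun l => p l 0)) //.
have -> : t - s + - t = - s by ring.
apply: eq_bigr => l _; ring.
Qed.

Lemma key2 v p x t : \sum_(k <- box v) p k 0 * Qpol g k x t =
  \sum_(j <- box v) Fm v p j t * mono x j.
Proof.
transitivity (\sum_(k <- box v) \sum_(j <- box v | mle j k)
    p k 0 * ((mbin k j)%:R * mono x j * moment g (- t) (msub k j))).
  rewrite big_seq [RHS]big_seq; apply: eq_bigr => k hk; rewrite mem_box in hk.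
  rewrite /Qpol box_refl mulr_sumr (box_sub xpredT _ hk).
  rewrite big_seq_cond [RHS]big_seq_cond.
  apply: eq_big => [i|i /andP[_ /andP[hi _]]]; first by rewrite andbT.
  rewrite (msubKK hi) /mbin.
  congr (_ * (_ * _ * _)); congr (_%:R); apply: eq_bigr => z _.
  by rewrite msubE bin_sub //; move/mleP: hi.
rewrite (exchange_big_dep xpredT) //=; apply: eq_bigr => j _.
rewrite /Fm mulr_suml; apply: eq_bigr => k _; ring.
Qed.

End Main.

Theorem mainTheorem6 (R : realFieldType) (d : nat) (hd : (0 < d)%N)
    (g : series R d) (hg0 : g (@m0 d) = 1)
    (v : mi d) (p : mi d -> R -> R) :
  (tsh g v p <->
     (forall t : R, 0 <= t -> forall k : mi d, mle k v ->
        p k t = \sum_(i <- box v | mle k i)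
                   (mbin i k)%:R * p i 0 * moment g (- t) (msub i k)))
  /\
  (tsh g v p <->
     (forall t : R, 0 <= t -> forall x : 'I_d -> R,
        Pev v p x t = \sum_(k <- box v) p k 0 * Qpol g k x t)).
Proof.
have P1 := @part1 R d g v p.
split; first exact: P1.
rewrite P1; split=> [HF t ht x | HP t ht].
  rewrite /Pev key2 big_seq [RHS]big_seq; apply: eq_bigr => j hj; rewrite mem_box in hj.
  by rewrite (HF t ht j hj).
have Z := @poly_ident R d v (fun j => p j t - Fm R d g v p j t).
move=> k hk; apply/eqP; rewrite -subr_eq0; apply/eqP; apply: Z hk => x.
under eq_bigr do rewrite mulrBl.
by rewrite sumrB -key2 -/(Pev v p x t) HP // subrr.
Qed.
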